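(* Let \(m\) be a positive integer that is not a perfect square, and let \(a,b,c\) be positive integers with \(\gcd(am,b^2-c^2m)=1\). Then \[Frob(a\sqrt m,\,b+c\sqrt m)=(a\sqrt m-1)(b+c\sqrt m-1)(1+\sqrt m)+\mathbb N[\sqrt m].\]
   Context: \(\mathbb N\) denotes the set of non-negative integers. \(\mathbb Z[\sqrt m]=\{u+v\sqrt m\mid u,v\in\mathbb Z\}\) and \(\mathbb N[\sqrt m]=\{u+v\sqrt m\mid u,v\in\mathbb N\}\). For \(\alpha_1,\alpha_2\in\mathbb Z[\sqrt m]\), \(SG(\alpha_1,\alpha_2)=\{\lambda_1\alpha_1+\lambda_2\alpha_2\mid \lambda_1,\lambda_2\in\mathbb N[\sqrt m]\}\) and \(Frob(\alpha_1,\alpha_2)=\{w\in\mathbb Z[\sqrt m]\mid w+\mathbb N[\sqrt m]\subseteq SG(\alpha_1,\alpha_2)\}\). *)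

(* Defs.v *)
(* Elements u + v*sqrt m of Z[sqrt m] are represented by pairs
   (u, v) : Z * Z; since m is not a perfect square this representation is
   unique, so Z[sqrt m] is identified with Z * Z with the multiplication below. *)
From Stdlib Require Import ZArith.
Open Scope Z_scope.

Definition zsq := (Z * Z)%type.

Definition zsq_add (x y : zsq) : zsq := (fst x + fst y, snd x + snd y).

Definition zsq_mul (m : Z) (x y : zsq) : zsq :=
  (fst x * fst y + m * (snd x * snd y), fst x * snd y + snd x * fst y).

Definition in_Nsq (x : zsq) : Prop := 0 <= fst x /\ 0 <= snd x.

Definition SG (m : Z) (alpha1 alpha2 : zsq) (w : zsq) : Prop :=
  exists l1 l2 : zsq, in_Nsq l1 /\ in_Nsq l2 /\
    w = zsq_add (zsq_mul m l1 alpha1) (zsq_mul m l2 alpha2).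

Definition Frob (m : Z) (alpha1 alpha2 : zsq) (w : zsq) : Prop :=
  forall n : zsq, in_Nsq n -> SG m alpha1 alpha2 (zsq_add w n).

(* Main.v *)
Require Import Defs.
From Stdlib Require Import ZArith.
From Stdlib Require Import Znumtheory Lia.
Open Scope Z_scope.

Lemma key (m a b c u v : Z)
  (hgcd : Z.gcd (a * m) (b ^ 2 - c ^ 2 * m) = 1) :
  (a * m | u * b + v * c * m) -> (a | u * c + v * b) ->
  (a * m | u) /\ (a | v).
Proof.
  intros [k1 Hk1] [k2 Hk2].
  pose proof (Zis_gcd_bezout _ _ _ (Zgcd_is_gcd (a*m) (b^2 - c^2*m))) as HB.
  rewrite hgcd in HB. destruct HB as [e f Hbez].
  split.
  - assert (E: u = u*e*(a*m) + f*(b*(u*b+v*c*m) - c*m*(u*c+v*b))).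
    { transitivity (u*(e*(a*m) + f*(b^2-c^2*m))).
      - rewrite Hbez; ring.
      - ring. }
    rewrite Hk1, Hk2 in E.
    exists (u*e + f*b*k1 - f*c*k2). rewrite E at 1. ring.
  - assert (E: v = v*e*(a*m) + f*(b*(u*c+v*b) - c*(u*b+v*c*m))).
    { transitivity (v*(e*(a*m) + f*(b^2-c^2*m))).
      - rewrite Hbez; ring.
      - ring. }
    rewrite Hk1, Hk2 in E.
    exists (v*e*m + f*b*k2 - f*c*k1*m). rewrite E at 1. ring.
Qed.

Lemma ge_lemma (n k : Z) : 0 < n -> k * n > -n -> k >= 0.
Proof.
  intros Hn H. destruct (Z_lt_ge_dec k 0) as [Hk|Hk]; [exfalso|exact Hk].
  assert (k*n <= -1*n) by (apply Z.mul_le_mono_nonneg_r; lia). lia.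
Qed.

Theorem theorem4 (m a b c : Z)
  (hm : 0 < m) (hsq : forall k : Z, k * k <> m)
  (ha : 0 < a) (hb : 0 < b) (hc : 0 < c)
  (hgcd : Z.gcd (a * m) (b ^ 2 - c ^ 2 * m) = 1) :
  forall w : zsq,
    Frob m (0, a) (b, c) w <->
    exists n : zsq, in_Nsq n /\
      w = zsq_add
            (zsq_mul m (zsq_mul m (-1, a) (b - 1, c)) (1, 1)) n.
Proof.
  assert (Ham : 0 < a * m) by nia.
  set (M1 := (a*m-1)*b + (a-1)*c*m).
  set (M2 := (a*m-1)*c + (a-1)*b).
  assert (HF : zsq_mul m (zsq_mul m (-1, a) (b - 1, c)) (1, 1)
               = (M1 - (a*m-1), M2 - (a-1))).
  { unfold zsq_mul, M1, M2; cbn [fst snd]. apply f_equal2; ring. }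
  rewrite HF.
  intros [w1 w2]; split.
  - intro HFr.
    assert (G1 : w1 >= M1 - (a*m-1)).
    { destruct (Z_lt_ge_dec w1 (M1 - (a*m-1))) as [Hl|]; [exfalso|assumption].
      set (s := M1 - (a*m-1) - 1).
      set (r := (M2 - w2) mod a).
      pose proof (Z_div_mod_eq_full (M2 - w2) a) as Hq.
      pose proof (Z.mod_pos_bound (M2 - w2) a ha) as Hr.
      fold r in Hq, Hr.
      set (q := (M2 - w2) / a) in Hq.
      destruct (HFr (s - w1, r)) as [[x y] [[u v] [[Hx Hy] [[Hu Hv] E]]]].
      { split; simpl; lia. }
      cbn [fst snd] in Hx, Hy, Hu, Hv.
      unfold zsq_add, zsq_mul in E; cbn [fst snd] in E. injection E as E1 E2.
      assert (D1 : (a*m | (u - (a*m-1))*b + (v - (a-1))*c*m)).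
      { exists (-(1+y)). unfold s, M1 in *. cbn [fst snd] in *. lia. }
      assert (D2 : (a | (u - (a*m-1))*c + (v - (a-1))*b)).
      { exists (-(q+x)). unfold M2 in *. cbn [fst snd] in *. lia. }
      destruct (key m a b c _ _ hgcd D1 D2) as [[k1 Hk1] [k2 Hk2]].
      assert (k1 >= 0) by (apply (ge_lemma (a*m)); lia).
      assert (k2 >= 0) by (apply (ge_lemma a); lia).
      assert (0 <= k1*(a*m)) by (apply Z.mul_nonneg_nonneg; lia).
      assert (0 <= k2*a) by (apply Z.mul_nonneg_nonneg; lia).
      assert (u >= a*m-1) by lia.
      assert (v >= a-1) by lia.
      assert (u*b >= (a*m-1)*b) by (apply Z.le_ge; apply Z.mul_le_mono_nonneg_r; lia).
      assert (v*c*m >= (a-1)*c*m) by (apply Z.le_ge; apply Z.mul_le_mono_nonneg_r; [lia|]; apply Z.mul_le_mono_nonneg_r; lia).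
      assert (y*a*m >= 0) by (apply Z.le_ge; apply Z.mul_nonneg_nonneg; [apply Z.mul_nonneg_nonneg|]; lia).
      unfold s, M1 in *. lia. }
    assert (G2 : w2 >= M2 - (a-1)).
    { destruct (Z_lt_ge_dec w2 (M2 - (a-1))) as [Hl|]; [exfalso|assumption].
      set (t := M2 - (a-1) - 1).
      set (r := (M1 - w1) mod (a*m)).
      pose proof (Z_div_mod_eq_full (M1 - w1) (a*m)) as Hq.
      pose proof (Z.mod_pos_bound (M1 - w1) (a*m) Ham) as Hr.
      fold r in Hq, Hr.
      set (q := (M1 - w1) / (a*m)) in Hq.
      destruct (HFr (r, t - w2)) as [[x y] [[u v] [[Hx Hy] [[Hu Hv] E]]]].
      { split; simpl; lia. }
      cbn [fst snd] in Hx, Hy, Hu, Hv.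
      unfold zsq_add, zsq_mul in E; cbn [fst snd] in E. injection E as E1 E2.
      assert (D1 : (a*m | (u - (a*m-1))*b + (v - (a-1))*c*m)).
      { exists (-(q+y)). unfold M1 in *. cbn [fst snd] in *. lia. }
      assert (D2 : (a | (u - (a*m-1))*c + (v - (a-1))*b)).
      { exists (-(1+x)). unfold t, M2 in *. cbn [fst snd] in *. lia. }
      destruct (key m a b c _ _ hgcd D1 D2) as [[k1 Hk1] [k2 Hk2]].
      assert (k1 >= 0) by (apply (ge_lemma (a*m)); lia).
      assert (k2 >= 0) by (apply (ge_lemma a); lia).
      assert (0 <= k1*(a*m)) by (apply Z.mul_nonneg_nonneg; lia).
      assert (0 <= k2*a) by (apply Z.mul_nonneg_nonneg; lia).
      assert (u >= a*m-1) by lia.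
      assert (v >= a-1) by lia.
      assert (u*c >= (a*m-1)*c) by (apply Z.le_ge; apply Z.mul_le_mono_nonneg_r; lia).
      assert (v*b >= (a-1)*b) by (apply Z.le_ge; apply Z.mul_le_mono_nonneg_r; lia).
      assert (x*a >= 0) by (apply Z.le_ge; apply Z.mul_nonneg_nonneg; lia).
      unfold t, M2 in *. lia. }
    exists (w1 - (M1 - (a*m-1)), w2 - (M2 - (a-1))). split.
    + split; simpl; lia.
    + unfold zsq_add; cbn [fst snd]. f_equal; ring.
  - intros [[n1 n2] [[Hn1 Hn2] Hw]] [p1 p2] [Hp1 Hp2].
    cbn [fst snd] in Hn1, Hn2, Hp1, Hp2.
    unfold zsq_add in Hw; cbn [fst snd] in Hw. injection Hw as Hw1 Hw2.
    unfold zsq_add; cbn [fst snd].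
    set (s := w1 + p1). set (t := w2 + p2).
    assert (Hs : s >= M1 - (a*m-1)) by (unfold s; lia).
    assert (Ht : t >= M2 - (a-1)) by (unfold t; lia).
    clearbody s t.
    pose proof (Zis_gcd_bezout _ _ _ (Zgcd_is_gcd (a*m) (b^2 - c^2*m))) as HB.
    rewrite hgcd in HB. destruct HB as [e f Hbez].
    set (u := f*(b*s - c*m*t)). set (v := f*(b*t - c*s)).
    pose proof (Z_div_mod_eq_full u (a*m)) as Hu.
    pose proof (Z.mod_pos_bound u (a*m) Ham) as Hu0.
    pose proof (Z_div_mod_eq_full v a) as Hv.
    pose proof (Z.mod_pos_bound v a ha) as Hv0.
    set (u0 := u mod (a*m)) in *. set (v0 := v mod a) in *.
    set (q1 := u / (a*m)) in *. set (q2 := v / a) in *.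
    clearbody u0 v0 q1 q2.
    assert (ES : u0*b + v0*c*m = s - a*m*(e*s + q1*b + q2*c)).
    { assert (u0 = u - a*m*q1) by lia. assert (v0 = v - a*q2) by lia.
      subst u0 v0. unfold u, v.
      transitivity (f*(b^2-c^2*m)*s - a*m*(q1*b+q2*c)); [ring|].
      replace (f*(b^2-c^2*m)) with (1 - e*(a*m)) by lia. ring. }
    assert (ET : u0*c + v0*b = t - a*(e*m*t + m*q1*c + q2*b)).
    { assert (u0 = u - a*m*q1) by lia. assert (v0 = v - a*q2) by lia.
      subst u0 v0. unfold u, v.
      transitivity (f*(b^2-c^2*m)*t - a*(m*q1*c+q2*b)); [ring|].
      replace (f*(b^2-c^2*m)) with (1 - e*(a*m)) by lia. ring. }
    set (K1 := e*s + q1*b + q2*c) in ES.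
    set (K2 := e*m*t + m*q1*c + q2*b) in ET.
    clearbody K1 K2.
    assert (B1 : u0*b + v0*c*m <= M1).
    { unfold M1.
      assert (u0*b <= (a*m-1)*b) by (apply Z.mul_le_mono_nonneg_r; lia).
      assert (v0*c*m <= (a-1)*c*m) by (apply Z.mul_le_mono_nonneg_r; [lia|]; apply Z.mul_le_mono_nonneg_r; lia).
      lia. }
    assert (B2 : u0*c + v0*b <= M2).
    { unfold M2.
      assert (u0*c <= (a*m-1)*c) by (apply Z.mul_le_mono_nonneg_r; lia).
      assert (v0*b <= (a-1)*b) by (apply Z.mul_le_mono_nonneg_r; lia).
      lia. }
    assert (K1 >= 0) by (apply (ge_lemma (a*m)); lia).
    assert (K2 >= 0) by (apply (ge_lemma a); lia).
    exists (K2, K1), (u0, v0). split; [split; simpl; lia|]. split; [split; simpl; lia|].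
    unfold zsq_add, zsq_mul; cbn [fst snd]. f_equal; lia.
Qed.
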